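(* Let $\mathbf{a}\in\mathbb{R}^n\setminus\{0\}$, $b\in\mathbb{R}$, $R,N\in\mathbb{N}$, let $\mathbf{a}'$ be a Diophantine approximation of $\mathbf{a}$ of precision $N$, and let $\alpha:=\|\mathbf{a}\|_\infty/\|\mathbf{a}'\|_\infty$. Then: (i) For every $b'\in\mathbb{R}$: $\mathbf{a}'\mathbf{x}\le b'\Rightarrow_R \mathbf{a}\mathbf{x}\le\alpha(b'+R/N)$, and $\mathbf{a}'\mathbf{x}\ge b'\Rightarrow_R\mathbf{a}\mathbf{x}\ge\alpha(b'-R/N)$. (ii) Suppose $R/N<1/4$ and $\alpha\ge2$. Then exactly one of the following two cases holds, and in each case the integer $b'$ described is unique: (non-dominating case) $-R\|\mathbf{a}\|_\infty-1<b<R\|\mathbf{a}\|_\infty$ and there is a unique $b'\in\mathbb{Z}$ with $|b'|\le R\|\mathbf{a}'\|_\infty$ such that $(b,b+1)\cap[\alpha(b'-R/N),\alpha(b'+R/N)]\ne\emptyset$; (dominating case) either there is a unique $b'\in\mathbb{Z}$ with $-R\|\mathbf{a}'\|_\infty\le b'\le R\|\mathbf{a}'\|_\infty-1$ such that $(b,b+1)\subseteq(\alpha(b'+R/N),\alpha(b'+1-R/N))$; or $b\ge R\|\mathbf{a}\|_\infty$ and $b'=R\|\mathbf{a}'\|_\infty$; or $b+1\le-R\|\mathbf{a}\|_\infty$ and $b'=-R\|\mathbf{a}'\|_\infty-1$. Furthermore, in the dominating case, $\mathbf{a}'\mathbf{x}\le b'\Rightarrow_R\mathbf{a}\mathbf{x}\le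 b$ and $\mathbf{a}'\mathbf{x}\ge b'+1\Rightarrow_R\mathbf{a}\mathbf{x}\ge b+1$.
   Context: For $\mathbf{a}\in\mathbb{R}^n\setminus\{0\}$ and integer $N\ge1$, $\mathbf{a}'\in\mathbb{Z}^n$ is a Diophantine approximation of $\mathbf{a}$ of precision $N$ if $\mathbf{a}'=\lfloor l\,\mathbf{a}/\|\mathbf{a}\|_\infty\rceil$ (coordinatewise rounding to nearest integer) for some integer $1\le l\le N^n$ with $\|l\,\mathbf{a}/\|\mathbf{a}\|_\infty-\mathbf{a}'\|_\infty<1/N$ and $\|\mathbf{a}'\|_\infty=l$. For a system $\mathsf{A}\mathbf{x}\le\mathbf{b}$ (possibly including equalities), $\mathbf{c}\in\mathbb{R}^n$, $d\in\mathbb{R}$ and $R\in\mathbb{N}$, the notation $\mathsf{A}\mathbf{x}\le\mathbf{b}\Rightarrow_R\mathbf{c}\mathbf{x}\le d$ means $\{\mathbf{x}\in\mathbb{R}^n:\|\mathbf{x}\|_1\le R,\ \mathsf{A}\mathbf{x}\le\mathbf{b}\}\subseteq\{\mathbf{x}\in\mathbb{R}^n:\|\mathbf{x}\|_1\le R,\ \mathbf{c}\mathbf{x}\le d\}$. *)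

(* Defs.v *)
From mathcomp Require Import all_boot all_order all_algebra.
From mathcomp Require Import reals.
Set Implicit Arguments. Unset Strict Implicit. Unset Printing Implicit Defensive.
Import Order.TTheory GRing.Theory Num.Theory.
Local Open Scope ring_scope.

Definition infnorm (T : realDomainType) (n : nat) (v : 'I_n -> T) : T :=
  \big[Num.max/0]_(i < n) `|v i|.

Definition onenorm (T : realDomainType) (n : nat) (v : 'I_n -> T) : T :=
  \sum_(i < n) `|v i|.

Definition dotv (R : realType) (n : nat) (c x : 'I_n -> R) : R :=
  \sum_(i < n) c i * x i.

Definition intvec (R : realType) (n : nat) (v : 'I_n -> int) : 'I_n -> R :=
  fun i => (v i)%:~R.

Definition round (R : realType) (x : R) : int := Num.floor (x + 2^-1).

Definition dioph_approx (R : realType) (n : nat) (a : 'I_n -> R)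
    (N : nat) (a' : 'I_n -> int) : Prop :=
  (1 <= N)%N /\
  exists l : nat,
    [/\ (1 <= l <= N ^ n)%N,
        (forall i, a' i = round (l%:R * a i / infnorm a)),
        infnorm (fun i => l%:R * a i / infnorm a - (a' i)%:~R) < N%:R^-1
      & infnorm a' = l%:Z].

Definition implies_R (R : realType) (n : nat) (r : nat)
    (P Q : ('I_n -> R) -> Prop) : Prop :=
  forall x : 'I_n -> R, onenorm x <= r%:R -> P x -> Q x.

Definition alpha (R : realType) (n : nat) (a : 'I_n -> R) (a' : 'I_n -> int) : R :=
  infnorm a / (infnorm a')%:~R.

Definition nondominating (R : realType) (n : nat) (a : 'I_n -> R)
    (a' : 'I_n -> int) (b : R) (r N : nat) : Prop :=
  let al := alpha a a' in
  - r%:R * infnorm a - 1 < b < r%:R * infnorm a /\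
  exists! b' : int,
    `|b'| <= r%:Z * infnorm a' /\
    exists y : R, b < y < b + 1 /\
      al * (b'%:~R - r%:R / N%:R) <= y <= al * (b'%:~R + r%:R / N%:R).

Definition dominating_with (R : realType) (n : nat) (a : 'I_n -> R)
    (a' : 'I_n -> int) (b : R) (r N : nat) (b' : int) : Prop :=
  let al := alpha a a' in
  [\/ (- (r%:Z * infnorm a') <= b' <= r%:Z * infnorm a' - 1) /\
        (forall y : R, b < y < b + 1 ->
           al * (b'%:~R + r%:R / N%:R) < y < al * (b'%:~R + 1 - r%:R / N%:R)),
      r%:R * infnorm a <= b /\ b' = r%:Z * infnorm a'
    | b + 1 <= - (r%:R * infnorm a) /\ b' = - (r%:Z * infnorm a') - 1].

Definition dominating (R : realType) (n : nat) (a : 'I_n -> R)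
    (a' : 'I_n -> int) (b : R) (r N : nat) : Prop :=
  exists! b' : int, dominating_with a a' b r N b'.

(* Main.v *)
Require Import Defs.
From mathcomp Require Import all_boot all_order all_algebra reals.
From mathcomp Require Import zify ring lra.
From Stdlib Require Import FunctionalExtensionality.
Import Order.TTheory GRing.Theory Num.Theory.
Set Implicit Arguments. Unset Strict Implicit.
Local Open Scope ring_scope.



Definition u (R : realType) (al : R) (k : int) : R := al * k%:~R.
Definition Pm (R : realType) (al p b : R) (k : int) := exists y, b < y < b + 1 /\ u al k - p <= y <= u al k + p.
Definition Gm (R : realType) (al p b : R) (k : int) := u al k + p <= b /\ b + 1 <= u al k + al - p.

Lemma u_le (R : realType) (al : R) (al2 : 2 <= al) (j : int) (k : int) : (j <= k)%R -> u al j <= u al k.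
Proof. move=> h; have al0 : 0 <= al by clear h; lra. by rewrite /u ler_wpM2l ?ler_int. Qed.
Lemma u_S (R : realType) (al : R) (k : int) : u al (k + 1) = u al k + al.
Proof. by rewrite /u intrD mulrDr mulr1. Qed.
Lemma u_lt (R : realType) (al : R) (al2 : 2 <= al) (j : int) (k : int) : (j < k)%R -> u al j + al <= u al k.
Proof. move=> h; rewrite -u_S; apply: (u_le al2); lia. Qed.

Lemma G_notP (R : realType) (al p b : R) (al2 : 2 <= al) (p0 : 0 <= p) (p4 : 4 * p < al) (k : int) (j : int) : Gm al p b k -> ~ Pm al p b j.
Proof.
move=> [h1 h2] [y [/andP[y1 y2] /andP[y3 y4]]].
case: (lerP j k) => hjk.
  have := u_le al2 hjk; lra.
have := u_lt al2 hjk; lra.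
Qed.

Lemma P_uniq (R : realType) (al p b : R) (al2 : 2 <= al) (p0 : 0 <= p) (p4 : 4 * p < al) (j : int) (k : int) : Pm al p b j -> Pm al p b k -> j = k.
Proof.
move=> [y [/andP[y1 y2] /andP[y3 y4]]] [z [/andP[z1 z2] /andP[z3 z4]]].
case: (ltrgtP j k) => // h.
  have := u_lt al2 h => ?; exfalso; lra.
have := u_lt al2 h => ?; exfalso; lra.
Qed.

Lemma G_uniq (R : realType) (al p b : R) (al2 : 2 <= al) (p0 : 0 <= p) (p4 : 4 * p < al) (j : int) (k : int) : Gm al p b j -> Gm al p b k -> j = k.
Proof.
move=> [h1 h2] [h3 h4].
case: (ltrgtP j k) => // h.
  have := u_lt al2 h => ?; exfalso; lra.
have := u_lt al2 h => ?; exfalso; lra.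
Qed.

Lemma exist_PG (R : realType) (al p b : R) (al2 : 2 <= al) (p0 : 0 <= p) (p4 : 4 * p < al) (L : int) : (0 <= L)%R -> u al (- L) - 1 < b -> b < u al L ->
  (exists k, (`|k| <= L)%R /\ Pm al p b k) \/ (exists k, (- L <= k <= L - 1)%R /\ Gm al p b k).
Proof.
move=> L0 hb1 hb2.
have uN : u al (-L) = - u al L by rewrite /u intrN mulrN.
have uL0 : 0 <= u al L by rewrite /u mulr_ge0 ?ler0z //; lra.
rewrite uN in hb1.
have al0 : 0 < al by lra.
have [y [hy1 [hy2 [hy3 hy4]]]] : exists y, b < y /\ y < b + 1 /\ - u al L <= y /\ y <= u al L.
  case: (ltrP b (- u al L)) => c1; case: (lerP (b + 1) (u al L)) => c2.
  - by exists ((- u al L + b + 1) / 2); lra.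
  - by exists 0; lra.
  - by exists (b + 2^-1); lra.
  - by exists ((b + u al L) / 2); lra.
have [k [hk1 [hk2 [kL kL']]]] : exists k, u al k <= y /\ y < u al k + al /\ (k <= L)%R /\ (- L <= k)%R.
  exists (Num.floor (y / al)); split.
    rewrite /u mulrC -ler_pdivlMr //; exact: floor_le.
  split.
    rewrite -u_S /u mulrC -ltr_pdivrMr //; rewrite -floor_lt_int; move: (Num.floor _) => f; lia.
  split.
    have : (Num.floor (y / al) < L + 1)%R.
      rewrite floor_lt_int ltr_pdivrMr // intrD mulrDl mul1r mulrC -/(u al L); lra.
    move: (Num.floor _) => f; lia.
  have : ~~ (Num.floor (y / al) < - L)%R.
    rewrite floor_lt_int -leNgt ler_pdivlMr // mulrC -/(u al (-L)) uN; lra.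
  move: (Num.floor _) => f; lia.
have kLu : k = L -> y <= u al k + p by move=> ->; lra.
have kabs : (`|k| <= L)%R by clear -kL kL'; lia.
have k1abs : (k <= L - 1)%R -> (`|k + 1| <= L)%R by clear -kL kL'; lia.
have kGrange : (k <= L - 1)%R -> (- L <= k <= L - 1)%R by clear -kL kL'; lia.
case: (lerP y (u al k + p)) => c1.
  left; exists k; split => //.
  exists y; split; first by rewrite hy1 hy2.
  by apply/andP; split; lra.
have kL2 : (k <= L - 1)%R.
  have : k != L by apply/eqP => /kLu; lra.
  by clear -kL; lia.
case: (lerP (u al k + al - p) y) => c2.
  left; exists (k + 1); split; first exact: k1abs.
  exists y; split; first by rewrite hy1 hy2.
  rewrite u_S; apply/andP; split; lra.
case: (ltrP b (u al k + p)) => c3.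
  left; exists k; split => //.
  exists (u al k + p); split; first by apply/andP; split; lra.
  apply/andP; split; lra.
case: (ltrP (u al k + al - p) (b + 1)) => c4.
  left; exists (k + 1); split; first exact: k1abs.
  exists (u al k + al - p); split; first by apply/andP; split; lra.
  rewrite u_S; apply/andP; split; lra.
right; exists k; split; first exact: kGrange.
by split.
Qed.


Definition NDg (R : realType) (al d b X Y : R) (L : int) : Prop :=
  - X * Y - 1 < b < X * Y /\
  exists! k : int, `|k| <= L /\
    exists y : R, b < y < b + 1 /\ al * (k%:~R - d) <= y <= al * (k%:~R + d).

Definition DWg (R : realType) (al d b X Y : R) (L : int) (k : int) : Prop :=
  [\/ (- L <= k <= L - 1) /\
        (forall y : R, b < y < b + 1 -> al * (k%:~R + d) < y < al * (k%:~R + 1 - d)),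
      X * Y <= b /\ k = L
    | b + 1 <= - (X * Y) /\ k = - L - 1].

Lemma fy_lemma (R : realType) (b c e : R) :
  (forall y : R, b < y < b + 1 -> c < y < e) -> c <= b /\ b + 1 <= e.
Proof.
move=> h; split.
  case: (lerP c b) => // c1; exfalso.
  case: (lerP c (b + 1)) => c2.
    have /andP[h1 h2] := h ((b + c) / 2) ltac:(apply/andP; split; lra); lra.
  have /andP[h1 h2] := h (b + 2^-1) ltac:(apply/andP; split; lra); lra.
case: (lerP (b + 1) e) => // c1; exfalso.
case: (lerP b e) => c2.
  have /andP[h1 h2] := h ((b + 1 + e) / 2) ltac:(apply/andP; split; lra); lra.
have /andP[h1 h2] := h (b + 2^-1) ltac:(apply/andP; split; lra); lra.
Qed.

Lemma PmE (R : realType) (al d b : R) (k : int) :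
  (exists y : R, b < y < b + 1 /\ al * (k%:~R - d) <= y <= al * (k%:~R + d)) <->
  Pm al (al * d) b k.
Proof. by rewrite /Pm /u mulrBr mulrDr. Qed.

Lemma DWG (R : realType) (al d b X Y : R) (L : int) (k : int) :
  DWg al d b X Y L k ->
  [\/ (- L <= k <= L - 1)%R /\ Gm al (al * d) b k,
      X * Y <= b /\ k = L | b + 1 <= - (X * Y) /\ k = - L - 1].
Proof.
case=> [[h1 /fy_lemma [h2 h3]]|h|h]; [apply: Or31|apply: Or32|apply: Or33] => //.
split => //; rewrite /Gm /u; split.
  by move: h2; rewrite mulrDr.
by move: h3; rewrite !mulrDr mulrN mulr1.
Qed.

Lemma GDW (R : realType) (al d b X Y : R) (L : int) (k : int) :
  (- L <= k <= L - 1)%R -> Gm al (al * d) b k -> DWg al d b X Y L k.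
Proof.
move=> h1 [h2 h3]; apply: Or31; split => // y /andP[y1 y2].
rewrite !mulrDr mulrN mulr1; move: h2 h3; rewrite /u => h2 h3.
apply/andP; split; lra.
Qed.

Lemma uniq_congr (P Q : int -> Prop) :
  (forall k, P k <-> Q k) -> (exists! k, P k) <-> (exists! k, Q k).
Proof.
move=> h; split => [[k [hk hu]]|[k [hk hu]]]; exists k; split;
  try (by apply/h); by move=> j /h; apply: hu.
Qed.

Lemma part2 (R : realType) (al d b X Y : R) (L : int) :
  2 <= al -> 0 <= d -> d < 4^-1 -> (0 <= L)%R -> X * Y = u al L ->
  (NDg al d b X Y L /\ ~ (exists! k, DWg al d b X Y L k)) \/
  (~ NDg al d b X Y L /\ (exists! k, DWg al d b X Y L k)).
Proof.
move=> al2 d0 d4 L0 XYE.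
have al0 : 0 < al by lra.
have p0 : 0 <= al * d by rewrite mulr_ge0 //; lra.
have p4 : 4 * (al * d) < al.
  have : al * (4 * d) < al * 1 by rewrite ltr_pM2l //; lra.
  rewrite mulr1; lra.
have uN : u al (- L) = - (X * Y) by rewrite /u intrN mulrN -/(u al L) XYE.
have XY0 : 0 <= X * Y by rewrite XYE /u mulr_ge0 ?ler0z //; lra.
have NDE : NDg al d b X Y L <->
   (- X * Y - 1 < b < X * Y /\ exists! k, (`|k| <= L)%R /\ Pm al (al * d) b k).
  rewrite /NDg; split => -[h1 h2]; split => //; move: h2;
    [apply: (fun H => proj1 (uniq_congr H)) | apply: (fun H => proj2 (uniq_congr H))];
    by move=> k; rewrite PmE.
rewrite NDE; clear NDE.
case: (lerP (X * Y) b) => c1.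
  right; split.
    by move=> [/andP[_ h] _]; lra.
  exists L; split; first by apply: Or32.
  move=> k /DWG [[hk [h2 h3]]|[_ ->]//|[h _]]; last by exfalso; lra.
  have hl : (k < L)%R by clear -hk; lia.
  have := u_lt al2 hl; rewrite -XYE => h; exfalso; lra.
case: (lerP (b + 1) (- (X * Y))) => c2.
  right; split.
    by move=> [/andP[h _] _]; move: h; rewrite mulNr; lra.
  exists (- L - 1); split; first by apply: Or33.
  move=> k /DWG [[hk [h2 h3]]|[h _]|[_ ->]//]; last by exfalso; lra.
  have hl : (- L <= k)%R by clear -hk; lia.
  have := u_le al2 hl; rewrite uN => h; exfalso; lra.
have hb1 : u al (- L) - 1 < b by rewrite uN; lra.
have hb2 : b < u al L by rewrite -XYE.
case: (exist_PG al2 p0 p4 L0 hb1 hb2) => [[k [hk hP]]|[k [hk hG]]].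
  left; split.
    split; first by apply/andP; split; rewrite ?mulNr; lra.
    exists k; split => // j [_ hj]; exact: (P_uniq al2 p0 p4 hP hj).
  move=> [k' [/DWG [[_ hG]|[h _]|[h _]] _]]; try (exfalso; lra).
  exact: (G_notP al2 p0 p4 hG hP).
right; split.
  move=> [_ [j [[_ hj] _]]]; exact: (G_notP al2 p0 p4 hG hj).
exists k; split; first exact: GDW.
move=> j /DWG [[_ hj]|[h _]|[h _]]; try (exfalso; lra).
exact: (G_uniq al2 p0 p4 hG hj).
Qed.


Lemma part3 (R : realType) (al d b X Y s t e : R) (L k : int) :
  2 <= al -> 0 <= d -> X * Y = u al L -> (0 <= L)%R ->
  `|t| <= X * Y -> `|s| <= L%:~R -> t = al * (s + e) -> `|e| <= d ->
  DWg al d b X Y L k ->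
  (s <= k%:~R -> t <= b) /\ (k%:~R + 1 <= s -> b + 1 <= t).
Proof.
move=> al2 d0 XYE L0 ht hs te he /DWG.
have al0 : 0 <= al by lra.
move: ht hs he; rewrite !ler_norml => /andP[t1 t2] /andP[s1 s2] /andP[e1 e2].
have ae1 : al * e <= al * d by rewrite ler_wpM2l.
have ae2 : al * (- d) <= al * e by rewrite ler_wpM2l.
rewrite mulrN in ae2.
rewrite te mulrDr.
case=> [[_ [h2 h3]]|[h ->]|[h ->]].
- move: h2 h3; rewrite /u => h2 h3; split => hk.
    have : al * s <= al * k%:~R by rewrite ler_wpM2l.
    lra.
  have : al * (k%:~R + 1) <= al * s by rewrite ler_wpM2l.
  rewrite mulrDr mulr1; lra.
- split => hk; first by lra.
  exfalso; lra.
- rewrite intrB intrN in s1 *; split => hk; first by exfalso; lra.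
  lra.
Qed.

Lemma big_max_ge (T : realDomainType) (I : eqType) (s : seq I) (P : pred I) (F : I -> T) i :
  i \in s -> P i -> F i <= \big[Num.max/0]_(j <- s | P j) F j.
Proof.
move=> + Pi; elim: s => // x s IH; rewrite inE big_cons => /orP[/eqP<-|h].
  by rewrite Pi le_max lexx.
by case: (P x); rewrite ?le_max IH ?orbT.
Qed.

Lemma infnorm_ge (T : realDomainType) n (v : 'I_n -> T) i : `|v i| <= infnorm v.
Proof.
rewrite /infnorm.
exact: (@big_max_ge T _ (index_enum 'I_n) xpredT (fun j => `|v j|) i (mem_index_enum i)).
Qed.

Lemma dot_bound (R : realType) n (c x : 'I_n -> R) M :
  (forall i, `|c i| <= M) -> `|dotv c x| <= M * onenorm x.
Proof.
move=> h; rewrite /dotv /onenorm mulr_sumr.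
apply: le_trans (ler_norm_sum _ _ _) _; apply: ler_sum => i _.
by rewrite normrM ler_wpM2r.
Qed.

Unset Implicit Arguments. Set Strict Implicit.

Theorem lemma3p1 (R : realType) (n : nat) (a : 'I_n -> R) (b : R)
    (r N : nat) (a' : 'I_n -> int) :
  a <> (fun _ => 0) ->
  dioph_approx a N a' ->
  (* (i) *)
  (forall b' : R,
     implies_R r (fun x => dotv (intvec R a') x <= b')
                 (fun x => dotv a x <= alpha a a' * (b' + r%:R / N%:R)) /\
     implies_R r (fun x => dotv (intvec R a') x >= b')
                 (fun x => dotv a x >= alpha a a' * (b' - r%:R / N%:R))) /\
  (* (ii) *)
  (r%:R / N%:R < 4^-1 :> R -> 2 <= alpha a a' ->
     ((nondominating a a' b r N /\ ~ dominating a a' b r N) \/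
      (~ nondominating a a' b r N /\ dominating a a' b r N)) /\
     (forall b' : int, dominating_with a a' b r N b' ->
        implies_R r (fun x => dotv (intvec R a') x <= b'%:~R)
                    (fun x => dotv a x <= b) /\
        implies_R r (fun x => dotv (intvec R a') x >= b'%:~R + 1)
                    (fun x => dotv a x >= b + 1))).
Proof.
move=> ha [N1 [l [/andP[l1 _] ha' he hl]]].
have [i ai] : exists i, a i != 0.
  case: (boolP [exists i, a i != 0]) => [/existsP//|/existsPn h].
  exfalso; apply: ha; apply: functional_extensionality => i.
  exact/eqP/negPn/h.
have A0 : 0 < infnorm a.
  apply: lt_le_trans (infnorm_ge a i); by rewrite normr_gt0.
have l0 : (0 < l%:R :> R) by rewrite ltr0n.
have N0 : (0 < N%:R :> R) by rewrite ltr0n.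
set A := infnorm a in A0 he *.
set al := alpha a a'.
have alE : al = A / l%:R by rewrite /al /alpha hl.
have al0 : 0 < al by rewrite alE divr_gt0.
set d := r%:R / N%:R.
have d0 : 0 <= d by rewrite /d divr_ge0.
pose ev := fun i => l%:R * a i / A - (a' i)%:~R.
have key : forall x : 'I_n -> R, onenorm x <= r%:R ->
   [/\ dotv a x = al * (dotv (intvec R a') x + dotv ev x),
       `|dotv ev x| <= d,
       `|dotv a x| <= r%:R * A &
       `|dotv (intvec R a') x| <= (r%:Z * infnorm a')%:~R].
  move=> x hx; split.
  - rewrite /dotv -big_split mulr_sumr; apply: eq_bigr => j _ /=.
    rewrite /intvec /ev alE; field.
    by rewrite !gt_eqF.
  - apply: le_trans (dot_bound x (M := N%:R^-1) _) _.
      move=> j; apply: ltW; apply: le_lt_trans (infnorm_ge ev j) he.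
    rewrite /d mulrC ler_wpM2r // invr_ge0 ler0n //.
  - apply: le_trans (dot_bound x (M := A) _) _; first exact: infnorm_ge.
    rewrite [r%:R * A]mulrC; first [ by apply: ler_wpM2l; [exact: ltW | exact: hx] | by rewrite -subr_ge0 -mulrBr mulr_ge0 // ?subr_ge0 // ltW | fail 1 "x" ].
  - apply: le_trans (dot_bound x (M := l%:R) _) _.
      move=> j; rewrite /intvec -intr_norm.
      have := infnorm_ge a' j; rewrite hl => h.
      by rewrite -[l%:R]/((l%:Z)%:~R) ler_int.
    by rewrite hl intrM mulrC ler_wpM2r ?ler0n.
split.
  move=> b'; split => x hx hs; have [E1 E2 _ _] := key x hx;
    move: E2; rewrite E1 ler_norml => /andP[e1 e2].
    by apply: ler_wpM2l; [exact: ltW | lra].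
  by apply: ler_wpM2l; [exact: ltW | lra].
move=> d4 al2.
have L0 : (0 <= r%:Z * infnorm a')%R by rewrite hl.
have XYE : r%:R * A = u al (r%:Z * infnorm a').
  rewrite /u hl intrM alE -[(r%:Z)%:~R]/(r%:R : R) -[(l%:Z)%:~R]/(l%:R : R).
  by field; rewrite gt_eqF.
split; first exact: (part2 b al2 d0 d4 L0 XYE).
move=> k hk; split => x hx hs; have [E1 E2 E3 E4] := key x hx;
  have := part3 al2 d0 XYE L0 E3 E4 E1 E2 hk; case=> H1 H2.
  exact: H1.
exact: H2.
Qed.
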